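(* Let $A$ be a finite group and let $G$ be a finite group containing $A$ and an element $c$ of order $n$ with $A\cap\langle c\rangle=\{1_G\}$ and $G=A\langle c\rangle$. For $x\in A$ let $\varphi(x)\in A$ and $\Pi(x)\in\mathbb{Z}_n$ be the unique elements with $cx=\varphi(x)c^{\Pi(x)}$, and let $m$ be the order of $\varphi$ (which is a skew-morphism of $A$ with power function $\pi$). Then: (a) $\langle c^m\rangle$ is a normal subgroup of $G$ and $G/\langle c^m\rangle$ is isomorphic to the skew product $A\langle\varphi\rangle$; (b) the subgroup $A\langle c^m\rangle$ is a semidirect product $A\ltimes\langle c^m\rangle$ in which $x^{-1}c^mx=(c^m)^{\sigma_\Pi(x,m)/m}$ for all $x\in A$; (c) $\mathrm{Av}(x)\equiv1\pmod{n/m}$ for all $x\in A$ if and only if $c^m$ is a central element of $G$.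
   Context: A skew-morphism of a finite group $A$ is a permutation $\varphi$ of $A$ with $\varphi(1_A)=1_A$ for which there is a function $\pi:A\to\mathbb{Z}_m$ ($m$ the order of $\varphi$) with $\varphi(xy)=\varphi(x)\varphi^{\pi(x)}(y)$ for all $x,y\in A$. For $f\in\{\pi,\Pi\}$, $\sigma_f(x,0)=0$ and $\sigma_f(x,k)=\sum_{i=1}^{k}f(\varphi^{i-1}(x))$ for $k>0$. The value $\sigma_\Pi(x,m)\in\mathbb{Z}_n$ is divisible by $m$, and $\mathrm{Av}(x)=\frac1m\sigma_\Pi(x,m)\in\mathbb{Z}_{n/m}$. The skew product $A\langle\varphi\rangle$ is the group on the set of formal products $x\varphi^i$ ($x\in A$, $i\in\mathbb{Z}_m$) with multiplication $x\varphi^i\cdot y\varphi^j=x\varphi^i(y)\varphi^{\sigma_\pi(y,i)+j}$. *)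

(* Defs.v *)
From mathcomp Require Import all_boot fingroup morphism quotient gproduct center.
Set Implicit Arguments. Unset Strict Implicit. Unset Printing Implicit Defensive.
Local Open Scope group_scope.

(* sigma_f(x,k) = sum_{i=1}^{k} f(phi^{i-1}(x)), computed in nat
   (reduce modulo the appropriate modulus where used). *)
Definition sigma (gT : Type) (f : gT -> nat) (phi : gT -> gT) (x : gT) (k : nat)
  : nat := \sum_(i < k) f (iter i phi x).

(* Multiplication of the skew product A<phi>, whose elements x phi^i are
   represented by pairs (x, i) with x in A and i < m:
   (x phi^i) (y phi^j) = x phi^i(y) phi^(sigma_pi(y,i) + j). *)
Definition skew_mul (gT : finGroupType) (phi : gT -> gT) (pi : gT -> nat)
  (m : nat) (a b : gT * nat) : gT * nat :=
  ((a.1 * iter a.2 phi b.1)%g, ((sigma pi phi b.1 a.2 + b.2) %% m)%N).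

(* Main.v *)
Require Import Defs.
From mathcomp Require Import all_boot fingroup morphism quotient gproduct center.
From mathcomp Require Import cyclic.
Local Open Scope group_scope.

Definition cexp (gT : finGroupType) (c y : gT) : nat :=
  find (fun i => c ^+ i == y) (iota 0 #[c]).

Arguments cexp {gT}.
Lemma cexpP {gT : finGroupType} (c y : gT) : y \in <[c]> -> c ^+ cexp c y = y.
Proof.
case/cyclePmin=> i lti ->.
have hs : has (fun i0 => c ^+ i0 == c ^+ i) (iota 0 #[c]).
  by apply/hasP; exists i; rewrite ?mem_iota //.
have := nth_find 0 hs; rewrite nth_iota ?add0n; first by move/eqP.
by move: hs; rewrite has_find size_iota.
Qed.

Theorem proposition4p1 (gT : finGroupType) (A G : {group gT}) (c : gT)
  (phi : gT -> gT) (Pi : gT -> nat) (m : nat) :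
  A \subset G -> c \in G ->
  A :&: <[c]> = 1 -> A * <[c]> = G ->
  (forall x, x \in A -> phi x \in A /\ (Pi x < #[c])%N /\
                        c * x = phi x * c ^+ Pi x) ->
  (0 < m)%N -> (forall x, x \in A -> iter m phi x = x) ->
  (forall k, (0 < k)%N -> (forall x, x \in A -> iter k phi x = x) -> (m <= k)%N) ->
  let pi := fun x => (Pi x %% m)%N in
  let H := <[c ^+ m]> in
  (H <| G /\
   exists f : coset_of H -> gT * nat,
     {in G / H &, injective f} /\
     (forall u, u \in G / H -> (f u).1 \in A /\ ((f u).2 < m)%N) /\
     (forall x i, x \in A -> (i < m)%N -> exists2 u, u \in G / H & f u = (x, i)) /\
     {in G / H &, forall u v, f (u * v) = skew_mul phi pi m (f u) (f v)})
  /\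
  (H ><| A = A * H /\
   forall x, x \in A -> (c ^+ m) ^ x = (c ^+ m) ^+ ((sigma Pi phi x m %% #[c]) %/ m))
  /\
  ((forall x, x \in A ->
      ((sigma Pi phi x m %% #[c]) %/ m) %% (#[c] %/ m) = 1 %% (#[c] %/ m))%N
   <-> c ^+ m \in 'Z(G)).
Proof.
move=> sAG Gc tiAC defG hphi m_gt0 phim phimin pi H.
set n := #[c].
have phiA : forall k x, x \in A -> iter k phi x \in A.
  by elim=> [|k IH] x Ax //=; case: (hphi _ (IH x Ax)).
have IT : forall k x, x \in A ->
    c ^+ k * x = iter k phi x * c ^+ (sigma Pi phi x k).
  elim=> [|k IH] x Ax; first by rewrite /sigma big_ord0 !expg0 mul1g mulg1.
  rewrite expgS -mulgA IH // mulgA.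
  have [_ [_ ->]] := hphi _ (phiA k x Ax).
  by rewrite -mulgA -expgD /sigma big_ord_recr /= addnC.
have Cc : forall i, c ^+ i \in <[c]> by move=> i; exact: mem_cycle.
have uniq1 : forall x y i j, x \in A -> y \in A ->
    x * c ^+ i = y * c ^+ j -> x = y.
  move=> x y i j Ax Ay e.
  by rewrite -(divgrMid tiAC Ax (Cc i)) e (divgrMid tiAC Ay (Cc j)).
pose P k := forall x, x \in A -> iter k phi x = x.
have PD : forall a b, P a -> P b -> P (a + b).
  by move=> a b Pa Pb x Ax; rewrite iterD Pb // Pa.
have PDr : forall a b, P a -> P (a + b) -> P b.
  by move=> a b Pa Pab x Ax; rewrite -{1}(Pa _ Ax) -iterD addnC Pab.
have PM : forall a k, P a -> P (k * a)%N.
  move=> a; elim=> [|k IH] Pa; first by move=> x Ax; rewrite mul0n.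
  by rewrite mulSn; apply: PD => //; apply: IH.
have Pdvd : forall k, P k -> (m %| k)%N.
  move=> k Pk; have Pr : P (k %% m).
    apply: (PDr (k %/ m * m)%N); first exact: PM.
    by rewrite -divn_eq.
  case: (posnP (k %% m)) => [r0|r0]; first by apply/eqP.
  by have := phimin _ r0 Pr; rewrite leqNgt ltn_pmod.
have Pn : P n.
  move=> x Ax; have := IT n x Ax; rewrite expg_order mul1g => e.
  symmetry; apply: (uniq1 x _ 0 (sigma Pi phi x n) Ax (phiA n x Ax)).
  by rewrite expg0 mulg1.
have mn : (m %| n)%N by apply: Pdvd.
have CJ : forall x, x \in A -> (c ^+ m) ^ x = c ^+ (sigma Pi phi x m).
  by move=> x Ax; rewrite conjgE IT // phim // mulKg.
have Ps : forall x, x \in A -> P (sigma Pi phi x m).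
  move=> x Ax y Ay.
  have Axy : x * y \in A by rewrite groupM.
  have e1 := IT (sigma Pi phi x m) y Ay.
  have e2 : c ^+ (sigma Pi phi x m) * y = y * c ^+ (sigma Pi phi (x * y) m).
    by rewrite -CJ // conjgE -mulgA -mulgA IT // phim // mulgA mulKg.
  symmetry; apply: (uniq1 y _ (sigma Pi phi (x * y) m) (sigma Pi phi y (sigma Pi phi x m)) Ay).
    exact: phiA.
  by rewrite -e1 e2.
have mdiv : forall x, x \in A -> (m %| sigma Pi phi x m %% n)%N.
  move=> x Ax; have := Pdvd _ (Ps x Ax).
  by rewrite /dvdn (modn_dvdm _ mn).
have CJ2 : forall x, x \in A -> (c ^+ m) ^ x = (c ^+ m) ^+ ((sigma Pi phi x m %% n) %/ m).
  move=> x Ax; rewrite CJ // -expgM mulnC divnK ?mdiv //.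
  by rewrite /n expg_mod_order.
have nAH : A \subset 'N(H).
  apply/subsetP=> x Ax; rewrite -cycle_subG norms_cycle CJ2 //; exact: mem_cycle.
have nCH : <[c]> \subset 'N(H).
  by rewrite norms_cycle conjgE -expgSr expgS mulKg cycle_id.
have nGH : G \subset 'N(H) by rewrite -defG mulG_subG nAH nCH.
have sHC : H \subset <[c]> by rewrite cycle_subG mem_cycle.
have nsHG : H <| G by rewrite /normal nGH cycle_subG groupX.
have tiHA : H :&: A = 1.
  apply/trivgP; rewrite -tiAC; apply/subsetP=> y; rewrite !inE => /andP[hy ay].
  by rewrite ay (subsetP sHC).
have partb : ((H ><| A = A * H) /\
   forall x, x \in A -> (c ^+ m) ^ x = (c ^+ m) ^+ ((sigma Pi phi x m %% #[c]) %/ m))%g.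
  split=> //; rewrite sdprodE //; by rewrite (normC nAH).
have ordH : #[c ^+ m] = (n %/ m)%N by rewrite orderXdiv.
have partc : (forall x, x \in A ->
      ((sigma Pi phi x m %% #[c]) %/ m) %% (#[c] %/ m) = 1 %% (#[c] %/ m))%N
   <-> c ^+ m \in 'Z(G).
  split.
    move=> hq; apply/centerP; split; first by rewrite groupX.
    move=> g; rewrite -defG => Gg; rewrite (divgr_eq A <[c]> g).
    apply: commuteM.
      have Ax := mem_divgr Gg.
      have e : (c ^+ m) ^ (divgr A <[c]> g) = c ^+ m.
        rewrite CJ2 //; rewrite -{2}(expg1 (c ^+ m)); apply/eqP.
        by rewrite eq_expg_mod_order ordH; apply/eqP; apply: hq.
      by rewrite /commute -{2}e conjgE mulKVg.
    have := mem_remgr Gg; case/cycleP=> i ->.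
    by apply: commuteX2; apply: commute_refl.
  move/centerP=> [_ cent] x Ax.
  have cx := cent x (subsetP sAG x Ax).
  apply/eqP; rewrite -ordH -eq_expg_mod_order expg1 -CJ2 //.
  by rewrite conjgE cx mulKg.
have inG : forall x i, x \in A -> x * c ^+ i \in G.
  move=> x i Ax; rewrite groupM ?groupX //; exact: (subsetP sAG).
have inN : forall x i, x \in A -> x * c ^+ i \in 'N(H).
  by move=> x i Ax; apply: (subsetP nGH); apply: inG.
have red : forall x i, coset H (x * c ^+ i) = coset H (x * c ^+ (i %% m)).
  move=> x i; rewrite {1}(divn_eq i m) addnC expgD mulgA coset_kerr //.
  by rewrite mulnC expgM mem_cycle.
have cosinj : forall x y i j, x \in A -> y \in A ->
    coset H (x * c ^+ i) = coset H (y * c ^+ j) -> x = y /\ (i %% m = j %% m)%N.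
  move=> x y i j Ax Ay e.
  have hH : (y * c ^+ j)^-1 * (x * c ^+ i) \in H.
    apply: coset_idr; first by rewrite groupM ?groupV ?inN.
    rewrite morphM ?groupV ?inN // morphV ?inN //. by rewrite /= e mulVg.
  case/cycleP: hH => k hk.
  have e2 : x * c ^+ i = y * c ^+ (j + m * k).
    by rewrite expgD mulgA expgM -hk mulKVg.
  have xy := uniq1 _ _ _ _ Ax Ay e2.
  split=> //.
  move: e2; rewrite xy => /mulgI /eqP; rewrite eq_expg_mod_order -/n => /eqP e3.
  have := congr1 (fun t => t %% m)%N e3; rewrite /= !(modn_dvdm _ mn).
  by rewrite addnC mulnC modnMDl.
pose f (u : coset_of H) := (divgr A <[c]> (repr u),
                            cexp c (remgr A <[c]> (repr u)) %% m)%N.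
have dec : forall u, u \in G / H ->
    (f u).1 \in A /\ ((f u).2 < m)%N /\ u = coset H ((f u).1 * c ^+ (f u).2).
  move=> u Gu.
  have ru := mem_repr_coset u.
  case/morphimP: Gu => g Ng Gg eu.
  have rG : repr u \in G.
    have := ru; rewrite eu val_coset // mem_rcoset => hr.
    rewrite -(groupMr _ (groupVr Gg)); apply: (subsetP (normal_sub nsHG)) hr.
  move: rG; rewrite -defG => rG.
  have Ax := mem_divgr rG.
  rewrite /f /=; split=> //; split; first exact: ltn_pmod.
  rewrite -red cexpP ?mem_remgr // -divgr_eq.
  by rewrite (coset_mem ru).
have fc : forall x i, x \in A -> f (coset H (x * c ^+ i)) = (x, (i %% m)%N).
  move=> x i Ax; set u := coset H (x * c ^+ i).
  have [Ax' [lt e]] := dec u (mem_quotient H (inG x i Ax)).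
  have [e1 e2] := cosinj _ _ _ _ Ax Ax' e.
  by rewrite e2 modn_small // e1; case: (f u).
have sig : forall y i, (sigma pi phi y i %% m = sigma Pi phi y i %% m)%N.
  by move=> y i; rewrite /sigma /pi modn_summ.
split; last by [].
split=> //.
exists f; split.
  move=> u v Gu Gv e.
  have [_ [_ eu]] := dec u Gu; have [_ [_ ev]] := dec v Gv.
  by rewrite eu ev e.
split; first by move=> u Gu; have [? [? _]] := dec u Gu.
split.
  move=> x i Ax lti; exists (coset H (x * c ^+ i)); first exact/mem_quotient/inG.
  by rewrite fc // modn_small.
have mulc : forall x i y j, x \in A -> y \in A ->
    f (coset H (x * c ^+ i) * coset H (y * c ^+ j)) =
    (x * iter i phi y, ((sigma Pi phi y i + j) %% m)%N).
  move=> x i y j Ax Ay; rewrite -morphM ?inN //.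
  have -> : x * c ^+ i * (y * c ^+ j) = (x * iter i phi y) * c ^+ (sigma Pi phi y i + j).
    by rewrite expgD !mulgA -(mulgA x) IT // !mulgA.
  by rewrite fc // groupM ?phiA.
move=> u v Gu Gv.
have [Ax [ix eu]] := dec u Gu; have [Ay [jy ev]] := dec v Gv.
rewrite {1}eu {1}ev mulc // /skew_mul /=; congr pair.
by rewrite -modnDml -sig modnDml.
Qed.
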